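(* Let $\mathcal{X}=\mathbb{V}^p$ for some $p\in\{0,1,\infty\}$ and let $\varphi$ be a dynamic LM-measure on $\mathcal{X}$. The following are equivalent: (1) $\varphi$ is semi-weakly acceptance time consistent, i.e. for all $V\in\mathcal{X}$, $t\in\mathbb{T}$ with $t<T$, and $m_{t+1}\in\bar L^0_{t+1}$: $\varphi_{t+1}(V)\ge m_{t+1}\Rightarrow\varphi_t(V)\ge 1_{\{V_t\ge0\}}\operatorname{Essinf}_t(m_{t+1})+1_{\{V_t<0\}}(-\infty)$; (2) for all $V\in\mathcal{X}$ and $t<T$: $\varphi_t(V)\ge 1_{\{V_t\ge0\}}\operatorname{Essinf}_t(\varphi_{t+1}(V))+1_{\{V_t<0\}}(-\infty)$; (3) for all $V\in\mathcal{X}$, $t<T$ and $m_t\in\bar L^0_t$: if $V_t\ge0$ and $\varphi_{t+1}(V)\ge m_t$, then $\varphi_t(V)\ge m_t$. Analogously, the following are equivalent: (1') $\varphi$ is semi-weakly rejection time consistent, i.e. $\varphi_{t+1}(V)\le m_{t+1}\Rightarrow\varphi_t(V)\le 1_{\{V_t\le0\}}\operatorname{Esssup}_t(m_{t+1})+1_{\{V_t>0\}}(+\infty)$ for all $V$, $t<T$, $m_{t+1}\in\bar L^0_{t+1}$; (2') $\varphi_t(V)\le 1_{\{V_t\le0\}}\operatorname{Esssup}_t(\varphi_{t+1}(V))+1_{\{V_t>0\}}(+\infty)$ for all $V$, $t<T$; (3') for all $V$, $t<T$, $m_t\in\bar L^0_t$: if $V_t\le0$ and $\varphi_{t+1}(V)\le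 m_t$ then $\varphi_t(V)\le m_t$.
   Context: Let $(\Omega,\mathcal{F},\{\mathcal{F}_t\}_{t\in\mathbb{T}},P)$ be a filtered probability space, $\mathbb{T}=\{0,\dots,T\}$, $\mathcal{F}_0$ trivial. $\bar L^0_t$ denotes $\mathcal{F}_t$-measurable random variables with values in $[-\infty,\infty]$; $L^p_t=L^p(\Omega,\mathcal{F}_t,P)$; $\mathbb{V}^p=\{(V_t)_{t\in\mathbb{T}}:V_t\in L^p_t\}$ ordered pointwise a.s. For $m\in L^\infty_t$, $m\cdot_tV:=(V_0,\dots,V_{t-1},mV_t,mV_{t+1},\dots)$. Conventions: $\infty-\infty=-\infty$, $0\cdot\pm\infty=0$. A dynamic LM-measure is a family $\{\varphi_t\}_{t\in\mathbb{T}}$ of maps $\varphi_t:\mathbb{V}^p\to\bar L^0_t$ with $1_A\varphi_t(V)=1_A\varphi_t(1_A\cdot_tV)$ for all $A\in\mathcal{F}_t$ and $V\le W\Rightarrow\varphi_t(V)\le\varphi_t(W)$. For bounded $X$, $\operatorname{Essinf}_tX$ is the largest $\mathcal{F}_t$-measurable random variable a.s. dominated by $X$, $\operatorname{Esssup}_tX=-\operatorname{Essinf}_t(-X)$; for $[-\infty,\infty]$-valued $X$, $\operatorname{Essinf}_tX:=\lim_n\operatorname{Essinf}_t(X^+\wedge n)-\lim_n\operatorname{Esssup}_t(X^-\wedge n)$ and $\operatorname{Esssup}_tX:=-\operatorname{Essinf}_t(-X)$. *)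

(* Defs.v *)
From HB Require Import structures.
From mathcomp Require Import all_boot all_order all_algebra.
From mathcomp Require Import all_classical all_reals all_analysis measurable_realfun.
From Stdlib Require ClassicalEpsilon.
Set Implicit Arguments. Unset Strict Implicit. Unset Printing Implicit Defensive.
Import Order.TTheory GRing.Theory Num.Theory.
Local Open Scope classical_set_scope.
Local Open Scope ring_scope.
Local Open Scope ereal_scope.

Section Defs.
Context {d : measure_display} {Omega : measurableType d} {R : realType}.

Definition meas_wrt (G : set (set Omega)) (X : Omega -> R) :=
  forall B : set R, measurable B -> G (X @^-1` B).
Definition emeas_wrt (G : set (set Omega)) (X : Omega -> \bar R) :=
  forall B : set (\bar R), measurable B -> G (X @^-1` B).

Definition is_filtration (F : nat -> set (set Omega)) :=
  [/\ (forall t, sigma_algebra setT (F t)),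
      (forall t, F t `<=` measurable),
      (forall s t, (s <= t)%N -> F s `<=` F t) &
      F 0%N = [set set0; setT]].

Inductive pexp := p0 | p1 | pinf.

(** L^p_t = L^p(Omega, F_t, P) (real valued, representatives) *)
Definition inLp (P : probability Omega R) (G : set (set Omega)) (p : pexp)
  (X : Omega -> R) :=
  meas_wrt G X /\
  match p with
  | p0 => True
  | p1 => P.-integrable setT (EFin \o X)
  | pinf => exists c : R, {ae P, forall w, (`|X w| <= c)%R}
  end.

Definition inL0bar (G : set (set Omega)) (X : Omega -> \bar R) := emeas_wrt G X.

(** processes V = (V_t)_{t in {0..T}} (indices > T are irrelevant) *)
Definition process := nat -> Omega -> R.

Definition inVp (P : probability Omega R) (F : nat -> set (set Omega))
  (T : nat) (p : pexp) (V : process) :=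
  forall t, (t <= T)%N -> inLp P (F t) p (V t).

Definition ple (P : probability Omega R) (T : nat) (V W : process) :=
  forall t, (t <= T)%N -> {ae P, forall w, (V t w <= W t w)%R}.

Definition mdot (t : nat) (m : Omega -> R) (V : process) : process :=
  fun s w => if (s < t)%N then V s w else (m w * V s w)%R.

Definition dynLM (P : probability Omega R) (F : nat -> set (set Omega))
  (T : nat) (p : pexp) (phi : nat -> process -> Omega -> \bar R) :=
  [/\ (forall t V, (t <= T)%N -> inVp P F T p V -> inL0bar (F t) (phi t V)),
      (forall t V (A : set Omega), (t <= T)%N -> inVp P F T p V -> F t A ->
         {ae P, forall w, (\1_A w)%:E * phi t V w
                          = (\1_A w)%:E * phi t (mdot t \1_A V) w}) &
      (forall t V W, (t <= T)%N -> inVp P F T p V -> inVp P F T p W ->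
         ple P T V W -> {ae P, forall w, phi t V w <= phi t W w})].

Definition is_essinf (P : probability Omega R) (G : set (set Omega))
  (X Y : Omega -> R) :=
  [/\ meas_wrt G Y, {ae P, forall w, (Y w <= X w)%R} &
      forall Z, meas_wrt G Z -> {ae P, forall w, (Z w <= X w)%R} ->
        {ae P, forall w, (Z w <= Y w)%R}].

Definition Essinfb (P : probability Omega R) (G : set (set Omega))
  (X : Omega -> R) : Omega -> R :=
  ClassicalEpsilon.epsilon (inhabits (fun _ => 0%R)) (is_essinf P G X).

Definition Esssupb (P : probability Omega R) (G : set (set Omega))
  (X : Omega -> R) : Omega -> R :=
  fun w => (- Essinfb P G (fun w' => - X w') w)%R.

Definition pos_trunc (X : Omega -> \bar R) (n : nat) : Omega -> R :=
  fun w => fine (mine (maxe (X w) 0) n%:R%:E).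
Definition neg_trunc (X : Omega -> \bar R) (n : nat) : Omega -> R :=
  fun w => fine (mine (maxe (- X w) 0) n%:R%:E).

(** Essinf_t X := lim_n Essinf_t(X^+ /\ n) - lim_n Esssup_t(X^- /\ n),
    with the convention oo - oo = -oo (that of mathcomp's adde). *)
Definition Essinf (P : probability Omega R) (G : set (set Omega))
  (X : Omega -> \bar R) : Omega -> \bar R :=
  fun w => limn (fun n => (Essinfb P G (pos_trunc X n) w)%:E)
         - limn (fun n => (Esssupb P G (neg_trunc X n) w)%:E).

Definition Esssup (P : probability Omega R) (G : set (set Omega))
  (X : Omega -> \bar R) : Omega -> \bar R :=
  fun w => - Essinf P G (fun w' => - X w') w.

Definition ege (P : probability Omega R) (X Y : Omega -> \bar R) :=
  {ae P, forall w, Y w <= X w}.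

End Defs.

(* Main.v *)
Require Import Defs.
From HB Require Import structures.
From mathcomp Require Import all_boot all_order all_algebra.
From mathcomp Require Import all_classical all_reals all_analysis measurable_realfun.
Import Order.TTheory GRing.Theory Num.Theory.
Local Open Scope classical_set_scope.
Local Open Scope ring_scope.
Local Open Scope ereal_scope.
Section Ext.
Context {R : realType}.
Local Set Implicit Arguments.
Definition tr (y : \bar R) (n : nat) : R := fine (mine y n%:R%:E).
Definition esup (u : (\bar R)^nat) := esups u 0%N.

Lemma esup_ub u k : u k <= esup u.
Proof. by apply: ereal_sup_ubound; exists k. Qed.

Lemma esup_le u x : (forall k, u k <= x) -> esup u <= x.
Proof. by move=> h; apply: ge_ereal_sup => _ [k _ <-]; exact: h. Qed.

Lemma esup_mono u v : (forall k, u k <= v k) -> esup u <= esup v.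
Proof. by move=> h; apply: esup_le => k; exact: le_trans (h k) (esup_ub v k). Qed.

Lemma limn_esup' (u : (\bar R)^nat) : (forall n, u n <= u n.+1) -> limn u = esup u.
Proof.
move=> h; have := ereal_nondecreasing_cvgn ((nondecreasing_seqP u).1 h).
move/cvg_lim => ->//; rewrite /esup /esups /=; congr ereal_sup.
by apply/seteqP; split => _ [k _ <-]; exists k.
Qed.

Lemma tr_E y n : 0 <= y -> (tr y n)%:E = mine y n%:R%:E.
Proof.
move=> y0; rewrite /tr fineK //; apply/fin_numPlt; apply/andP; split.
  by rewrite lt_min (lt_le_trans _ y0) ?ltNyr // ltNyr.
by rewrite gt_min ltry orbT.
Qed.

Lemma tr_bnd y n : 0 <= y -> (0 <= tr y n <= n%:R)%R.
Proof.
move=> y0; rewrite -!lee_fin tr_E // le_min y0 lee_fin ler0n /= ge_min lexx orbT.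
by [].
Qed.

Lemma tr_mono y z n : 0 <= y -> y <= z -> (tr y n <= tr z n)%R.
Proof.
move=> y0 yz; rewrite -lee_fin !tr_E //; last exact: le_trans y0 yz.
by rewrite le_min !ge_min yz lexx !orbT.
Qed.

Lemma tr_monon y n : 0 <= y -> (tr y n <= tr y n.+1)%R.
Proof.
move=> y0; rewrite -lee_fin !tr_E // le_min !ge_min lexx /= lee_fin ler_nat leqnSn.
by rewrite orbT.
Qed.

Lemma esup_tr y : 0 <= y -> esup (fun n => (tr y n)%:E) = y.
Proof.
move=> y0; apply/eqP; rewrite eq_le; apply/andP; split.
  by apply: esup_le => k; rewrite tr_E // ge_min lexx.
case: y y0 => [r| |] y0 //.
- apply: le_trans (esup_ub _ (Num.trunc r).+1).
  rewrite tr_E // le_min lexx /= lee_fin; exact/ltW/truncnS_gt.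
- rewrite leNgt; apply/negP => hs.
  have s0 : 0 <= esup (fun n => (tr +oo n)%:E).
    by apply: le_trans (esup_ub _ 0%N); rewrite lee_fin; case/andP: (@tr_bnd +oo 0%N y0).
  have sfin : esup (fun n => (tr +oo n)%:E) \is a fin_num.
    by apply/fin_numPlt; rewrite hs (lt_le_trans _ s0) // ltNyr.
  set s := esup _ in hs s0 sfin.
  have := esup_ub (fun n => (tr +oo n)%:E) (Num.trunc (fine s)).+1.
  rewrite -/s tr_E // -(fineK sfin).
  rewrite (_ : mine +oo _ = ((Num.trunc (fine s)).+1%:R)%:E); last first.
    by apply/min_idPr; exact: leey.
  rewrite lee_fin leNgt => /negP; apply; exact: truncnS_gt.
Qed.

Lemma posneg (x : \bar R) : x = maxe x 0 - maxe (- x) 0.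
Proof.
have [x0|x0] := leP 0 x.
  have -> : maxe (- x) 0 = 0 by apply/max_idPr; rewrite leeNl oppe0.
  by rewrite sube0.
have -> : maxe (- x) 0 = - x by apply/max_idPl; rewrite leeNr oppe0 ltW.
by rewrite sub0e oppeK.
Qed.
End Ext.
Section S.
Local Set Implicit Arguments.
Context {d : measure_display} {Omega : measurableType d} {R : realType} (P : probability Omega R).
Context (G : set (set Omega)) (hG : sigma_algebra setT G) (hGm : G `<=` measurable).

Lemma measGU d' (U : measurableType d') (X : Omega -> U) :
  (forall B, measurable B -> G (X @^-1` B)) <->
  measurable_fun (setT : set (g_sigma_algebraType G)) X.
Proof.
have E := measurable_g_measurableTypeE hG.
split=> [h _ B mB|h B mB].
- rewrite setTI; rewrite E; exact: h.
- have := h measurableT B mB; rewrite setTI E; exact.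
Qed.

Lemma measG (X : Omega -> R) : meas_wrt G X <-> measurable_fun (setT : set (g_sigma_algebraType G)) X.
Proof. exact: measGU. Qed.
Lemma emeasG (X : Omega -> \bar R) : emeas_wrt G X <-> measurable_fun (setT : set (g_sigma_algebraType G)) X.
Proof. exact: measGU. Qed.

Lemma measG_meas d' (U : measurableType d') (X : Omega -> U) :
  measurable_fun (setT : set (g_sigma_algebraType G)) X -> measurable_fun (setT : set Omega) X.
Proof.
move=> /measGU h _ B mB; rewrite setTI; exact/hGm/h.
Qed.

Lemma int_bdd (X : Omega -> R) (c : R) : measurable_fun setT X ->
  (forall w, `|X w| <= c)%R -> P.-integrable setT (EFin \o X).
Proof.
move=> mX hc; apply: (le_integrable measurableT _ _ (finite_measure_integrable_cst P c measurableT)).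
- exact/measurable_EFinP.
- move=> w _ /=; rewrite lee_fin (le_trans (hc w))//. exact: ler_norm.
Qed.

Lemma essinf_exists (X : Omega -> R) (c : R) : (forall w, `|X w| <= c)%R ->
  exists Y, is_essinf P G X Y.
Proof.
move=> hX.
have c0 : (0 <= c)%R by exact: le_trans (normr_ge0 _) (hX point).
pose GT := g_sigma_algebraType G.
pose Adm (Z : Omega -> R) := [/\ measurable_fun (setT : set GT) Z,
   (forall w, `|Z w| <= c)%R & {ae P, forall w, (Z w <= X w)%R}].
pose I (Z : Omega -> R) := \int[P]_w (Z w)%:E.
have intA Z : Adm Z -> P.-integrable setT (EFin \o Z).
  by case=> mZ bZ _; apply: int_bdd bZ; exact: measG_meas.
have Ile Z : Adm Z -> I Z <= c%:E.
  move=> AZ; rewrite /I.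
  have -> : c%:E = \int[P]_w (cst c%:E w).
    by rewrite integral_cst// [X in _ * X]probability_setT mule1.
  apply: le_integral => //; first exact: intA.
    exact: (finite_measure_integrable_cst P c measurableT).
  move=> w _; case: AZ => _ bZ _; rewrite lee_fin.
  exact: le_trans (ler_norm _) (bZ w).
have Ige Z : Adm Z -> (- c)%:E <= I Z.
  move=> AZ; rewrite /I.
  have -> : (- c)%:E = \int[P]_w (cst (- c)%:E w).
    by rewrite integral_cst// [X in _ * X]probability_setT mule1.
  apply: le_integral => //; last first.
    move=> w _; case: AZ => _ bZ _; rewrite lee_fin.
    by move: (bZ w); rewrite ler_norml => /andP[].
    exact: intA.
  exact: (finite_measure_integrable_cst P (- c) measurableT).
have Acst : Adm (cst (- c)%R).
  split; first exact: measurable_cst.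
    by move=> w; rewrite /= normrN ger0_norm.
  apply: aeW => w /=; move: (hX w); rewrite ler_norml => /andP[] //.
pose S := [set I Z | Z in Adm].
pose s := ereal_sup S.
have sle : s <= c%:E by apply: ge_ereal_sup => _ [Z AZ <-]; exact: Ile.
have sge : (- c)%:E <= s.
  by apply: ereal_sup_ge; exists (I (cst (- c)%R)); [exists (cst (- c)%R)|exact: Ige].
have sfin : s = (fine s)%:E.
  rewrite fineK//; apply/fin_numPlt; rewrite (lt_le_trans _ sge) ?ltNyr//.
  by rewrite (le_lt_trans sle) ?ltey.
set r := fine s in sfin.
have hk k : exists Z, Adm Z /\ (r - k.+1%:R^-1)%:E < I Z.
  have : (r - k.+1%:R^-1)%:E < s by rewrite sfin lte_fin ltrBlDr ltrDl invr_gt0.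
  by move/ereal_sup_gt => [_ [Z AZ <-] h]; exists Z.
have [Zs hZs] := choice hk.
pose Y w := sups (fun k => Zs k w) 0%N.
have Zub w : has_ubound (range (fun k => Zs k w)).
  by exists c => _ [k _ <-]; case: (hZs k).1 => _ b _; exact: le_trans (ler_norm _) (b w).
have Zsub w : has_ubound (sdrop (fun k => Zs k w) 0).
  by exists c => _ [k _ <-]; case: (hZs k).1 => _ b _; exact: le_trans (ler_norm _) (b w).
have Yge w k : (Zs k w <= Y w)%R.
  by apply: ub_le_sup => //; exists k.
have Yle w x : (forall k, Zs k w <= x)%R -> (Y w <= x)%R.
  move=> h; apply: ge_sup; first by exists (Zs 0%N w), 0%N.
  by move=> _ [k _ <-]; exact: h.
have AY : Adm Y.
  split.
  - by apply: measurable_fun_sups => [t _|k]; [exact: Zub|case: (hZs k).1].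
  - move=> w; rewrite ler_norml; apply/andP; split.
      apply: le_trans (Yge w 0%N); case: (hZs 0%N).1 => _ b _.
      by move: (b w); rewrite ler_norml => /andP[].
    by apply: Yle => k; case: (hZs k).1 => _ b _; exact: le_trans (ler_norm _) (b w).
  - have : {ae P, forall w, forall k, (Zs k w <= X w)%R}.
      by apply: ae_foralln => k; case: (hZs k).1.
    by apply: filterS => w h; exact: Yle.
have IY : I Y = s.
  apply/eqP; rewrite eq_le; apply/andP; split.
    by apply: ereal_sup_ubound; exists Y.
  have IYfin : I Y = (fine (I Y))%:E.
    rewrite fineK//; apply/fin_numPlt; rewrite (lt_le_trans _ (Ige _ AY)) ?ltNyr//.
    by rewrite (le_lt_trans (Ile _ AY)) ?ltey.
  rewrite sfin IYfin lee_fin leNgt; apply/negP => /ltr_add_invr [k hk'].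
  have := (hZs k).2; rewrite /I.
  have : \int[P]_w (Zs k w)%:E <= \int[P]_w (Y w)%:E.
    apply: le_integral => //; [exact: intA (hZs k).1|exact: intA AY|].
    by move=> w _; rewrite lee_fin.
  rewrite -/(I Y) IYfin => h1 h2.
  have := lt_le_trans h2 h1; rewrite lte_fin ltrBlDr => h3.
  by move: (lt_trans h3 hk'); rewrite ltxx.
exists Y; split.
- by apply/measG; case: AY.
- by case: AY.
move=> Z mZ hZ.
pose W w := Order.max (Y w) (Order.min (Z w) c).
have AW : Adm W.
  split.
  - apply: measurable_maxr; first by case: AY.
    by apply: measurable_minr; [exact/measG|exact: measurable_cst].
  - move=> w; rewrite ler_norml; apply/andP; split.
      rewrite /W le_max; apply/orP; left.
      by case: AY => _ b _; move: (b w); rewrite ler_norml => /andP[].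
    rewrite ge_max ge_min lexx orbT andbT.
    by case: AY => _ b _; exact: le_trans (ler_norm _) (b w).
  - case: AY => _ _ hY.
    apply: filterS (filterI hY hZ) => w [h1 h2].
    by rewrite ge_max h1 /= ge_min h2.
have IW : I W <= I Y by rewrite IY; apply: ereal_sup_ubound; exists W.
have WY w : (Y w <= W w)%R by rewrite le_max lexx.
pose f w := ((W w - Y w)%R)%:E.
have mf : measurable_fun setT f.
  apply/measurable_EFinP; apply: measurable_funB; apply: measG_meas.
    by case: AW. by case: AY.
have If : \int[P]_w `|f w| = 0.
  apply/eqP; rewrite eq_le; apply/andP; split; last first.
    by apply: integral_ge0 => w _.
  have -> : (fun w => `|f w|) = (fun w => (W w)%:E - (Y w)%:E).
    by apply/funext => w; rewrite /f gee0_abs ?EFinB// lee_fin subr_ge0.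
  rewrite integralB_EFin //; [|exact: intA|exact: intA].
  by rewrite sube_le0.
have := (ae_eq_integral_abs P measurableT mf).1 If.
apply: filterS2 hZ => w hZw /(_ Logic.I) /eqP; rewrite /f eqe subr_eq0 => /eqP hW.
have : (Order.min (Z w) c <= Y w)%R by rewrite -hW le_max lexx orbT.
rewrite ge_min => /orP[//|]; move=> cY.
exact: le_trans (le_trans hZw (le_trans (ler_norm _) (hX w))) cY.
Qed.

Definition bdd (X : Omega -> R) := exists c, forall w, (`|X w| <= c)%R.

Lemma Essinfb_spec (X : Omega -> R) : bdd X -> is_essinf P G X (Essinfb P G X).
Proof. by case=> c hc; apply: ClassicalEpsilon.epsilon_spec; exact: essinf_exists hc. Qed.

Lemma Essinfb_specm (X : Omega -> R) : meas_wrt G X -> is_essinf P G X (Essinfb P G X).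
Proof.
move=> mX; apply: ClassicalEpsilon.epsilon_spec; exists X; split => //.
exact: aeW.
Qed.

Lemma Essinfb_id (X : Omega -> R) : meas_wrt G X -> {ae P, forall w, Essinfb P G X w = X w}.
Proof.
move=> mX; have [_ hle hmax] := Essinfb_specm mX.
have := hmax X mX (aeW _ (fun w => lexx (X w))).
by apply: filterS2 hle => w h1 h2; apply/eqP; rewrite eq_le h1 h2.
Qed.

Lemma Essinfb_meas (X : Omega -> R) : bdd X -> meas_wrt G (Essinfb P G X).
Proof. by move/Essinfb_spec => []. Qed.

Lemma Essinfb_le (X : Omega -> R) : bdd X -> {ae P, forall w, (Essinfb P G X w <= X w)%R}.
Proof. by move/Essinfb_spec => []. Qed.

Lemma Essinfb_mono (X Y : Omega -> R) : bdd X -> bdd Y -> {ae P, forall w, (X w <= Y w)%R} ->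
  {ae P, forall w, (Essinfb P G X w <= Essinfb P G Y w)%R}.
Proof.
move=> bX bY XY; have [mX leX _] := Essinfb_spec bX.
have [_ _ maxY] := Essinfb_spec bY; apply: (maxY _ mX).
by apply: filterS2 leX XY => w; exact: le_trans.
Qed.

Lemma bddN (X : Omega -> R) : bdd X -> bdd (fun w => - X w)%R.
Proof. by case=> c hc; exists c => w; rewrite normrN. Qed.

Lemma measN (X : Omega -> R) : meas_wrt G X -> meas_wrt G (fun w => - X w)%R.
Proof. by move=> /measG mX; apply/measG; exact: measurable_funN. Qed.

Lemma Esssupb_ge (X : Omega -> R) : bdd X -> {ae P, forall w, (X w <= Esssupb P G X w)%R}.
Proof.
move=> /bddN /Essinfb_le; apply: filterS => w.
by rewrite /Esssupb lerNr.
Qed.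

Lemma Esssupb_meas (X : Omega -> R) : bdd X -> meas_wrt G (Esssupb P G X).
Proof. by move=> /bddN /Essinfb_meas /measN. Qed.

Lemma Esssupb_mono (X Y : Omega -> R) : bdd X -> bdd Y -> {ae P, forall w, (X w <= Y w)%R} ->
  {ae P, forall w, (Esssupb P G X w <= Esssupb P G Y w)%R}.
Proof.
move=> bX bY XY.
have : {ae P, forall w, (- Y w <= - X w)%R}.
  by apply: filterS XY => w; rewrite lerN2.
move/(Essinfb_mono (bddN bY) (bddN bX)).
by apply: filterS => w; rewrite /Esssupb lerN2.
Qed.

Lemma Esssupb_id (X : Omega -> R) : meas_wrt G X -> {ae P, forall w, Esssupb P G X w = X w}.
Proof.
move=> /measN /Essinfb_id; apply: filterS => w.
by rewrite /Esssupb => ->; rewrite opprK.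
Qed.

Lemma bdd_tr (Y : Omega -> \bar R) n : (forall w, 0 <= Y w) -> bdd (fun w => tr (Y w) n).
Proof.
move=> h; exists n%:R => w; case/andP: (@tr_bnd R (Y w) n (h w)) => a b.
by rewrite ger0_norm.
Qed.

Lemma maxe0_ge0 (x : \bar R) : 0 <= maxe x 0.
Proof. by rewrite le_max lexx orbT. Qed.

Lemma bdd_pos (X : Omega -> \bar R) n : bdd (pos_trunc X n).
Proof. by apply: bdd_tr => w; exact: maxe0_ge0. Qed.

Lemma bdd_neg (X : Omega -> \bar R) n : bdd (neg_trunc X n).
Proof. by apply: bdd_tr => w; exact: maxe0_ge0. Qed.

Definition sA (X : Omega -> \bar R) w := esup (fun n => (Essinfb P G (pos_trunc X n) w)%:E).
Definition sB (X : Omega -> \bar R) w := esup (fun n => (Esssupb P G (neg_trunc X n) w)%:E).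

Lemma Essinf_ae (X : Omega -> \bar R) : {ae P, forall w, Essinf P G X w = sA X w - sB X w}.
Proof.
have hA : {ae P, forall w, forall n,
    (Essinfb P G (pos_trunc X n) w <= Essinfb P G (pos_trunc X n.+1) w)%R}.
  apply: ae_foralln => n; apply: Essinfb_mono; try exact: bdd_pos.
  by apply: aeW => w; apply: tr_monon; exact: maxe0_ge0.
have hB : {ae P, forall w, forall n,
    (Esssupb P G (neg_trunc X n) w <= Esssupb P G (neg_trunc X n.+1) w)%R}.
  apply: ae_foralln => n; apply: Esssupb_mono; try exact: bdd_neg.
  by apply: aeW => w; apply: tr_monon; exact: maxe0_ge0.
apply: filterS2 hA hB => w hA hB.
by rewrite /Essinf !limn_esup' // => n; rewrite lee_fin.
Qed.

Lemma Essinf_meas (X : Omega -> \bar R) : emeas_wrt G (fun w => sA X w - sB X w).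
Proof.
apply/emeasG; rewrite /sA /sB /esup; apply: emeasurable_funB.
  apply: (@measurable_fun_esups _ (g_sigma_algebraType G) R setT (fun n w => (Essinfb P G (pos_trunc X n) w)%:E) _ 0%N) => n.
  by apply/measurable_EFinP; apply/measG; apply: Essinfb_meas; exact: bdd_pos.
apply: (@measurable_fun_esups _ (g_sigma_algebraType G) R setT (fun n w => (Esssupb P G (neg_trunc X n) w)%:E) _ 0%N) => n.
by apply/measurable_EFinP; apply/measG; apply: Esssupb_meas; exact: bdd_neg.
Qed.

Lemma Essinf_mono (X Y : Omega -> \bar R) : {ae P, forall w, X w <= Y w} ->
  {ae P, forall w, Essinf P G X w <= Essinf P G Y w}.
Proof.
move=> XY.
have hA : {ae P, forall w, forall n,
    (Essinfb P G (pos_trunc X n) w <= Essinfb P G (pos_trunc Y n) w)%R}.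
  apply: ae_foralln => n; apply: Essinfb_mono; try exact: bdd_pos.
  apply: filterS XY => w h; apply: tr_mono; first exact: maxe0_ge0.
  by rewrite ge_max !le_max h lexx !orbT.
have hB : {ae P, forall w, forall n,
    (Esssupb P G (neg_trunc Y n) w <= Esssupb P G (neg_trunc X n) w)%R}.
  apply: ae_foralln => n; apply: Esssupb_mono; try exact: bdd_neg.
  apply: filterS XY => w h; apply: tr_mono; first exact: maxe0_ge0.
  by rewrite ge_max !le_max leeN2 h lexx !orbT.
have h1 := Essinf_ae X; have h2 := Essinf_ae Y.
apply: filterS2 (filterI h1 h2) (filterI hA hB) => w [-> ->] [hA1 hB1].
apply: leeB; apply: esup_mono => n; rewrite lee_fin; [exact: hA1|exact: hB1].
Qed.

Lemma Essinf_le (X : Omega -> \bar R) : {ae P, forall w, Essinf P G X w <= X w}.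
Proof.
have hA : {ae P, forall w, forall n, (Essinfb P G (pos_trunc X n) w <= pos_trunc X n w)%R}.
  by apply: ae_foralln => n; apply: Essinfb_le; exact: bdd_pos.
have hB : {ae P, forall w, forall n, (neg_trunc X n w <= Esssupb P G (neg_trunc X n) w)%R}.
  by apply: ae_foralln => n; apply: Esssupb_ge; exact: bdd_neg.
apply: filterS2 (Essinf_ae X) (filterI hA hB) => w -> [hA1 hB1].
rewrite [leRHS]posneg; apply: leeB.
  apply: esup_le => n; apply: le_trans (_ : (pos_trunc X n w)%:E <= _).
    by rewrite lee_fin.
  by rewrite /pos_trunc -/(tr _ n) tr_E ?ge_min ?lexx //; exact: maxe0_ge0.
rewrite -[leLHS](@esup_tr R _ (maxe0_ge0 (- X w))); apply: esup_mono => n.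
by rewrite lee_fin; exact: hB1.
Qed.

Lemma Essinf_self (m : Omega -> \bar R) : emeas_wrt G m ->
  {ae P, forall w, m w <= Essinf P G m w}.
Proof.
move=> /emeasG mm.
have mp n : meas_wrt G (pos_trunc m n).
  apply/measG; apply: measurableT_comp; first exact: fine_measurable.
  apply: measurable_mine => //; apply: measurable_maxe => //.
have mn n : meas_wrt G (neg_trunc m n).
  apply/measG; apply: measurableT_comp; first exact: fine_measurable.
  apply: measurable_mine => //; apply: measurable_maxe => //.
  exact: measurableT_comp.
have hA : {ae P, forall w, forall n, Essinfb P G (pos_trunc m n) w = pos_trunc m n w}.
  by apply: ae_foralln => n; apply: Essinfb_id.
have hB : {ae P, forall w, forall n, Esssupb P G (neg_trunc m n) w = neg_trunc m n w}.
  by apply: ae_foralln => n; apply: Esssupb_id.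
apply: filterS2 (Essinf_ae m) (filterI hA hB) => w -> [hA1 hB1].
rewrite /sA /sB.
have -> : (fun n => (Essinfb P G (pos_trunc m n) w)%:E) = (fun n => (tr (maxe (m w) 0) n)%:E).
  by apply/funext => n; rewrite hA1.
have -> : (fun n => (Esssupb P G (neg_trunc m n) w)%:E) = (fun n => (tr (maxe (- m w)%E 0) n)%:E).
  by apply/funext => n; rewrite hB1.
rewrite (@esup_tr R _ (maxe0_ge0 (m w))) (@esup_tr R _ (maxe0_ge0 (- m w))).
by rewrite -posneg.
Qed.
End S.
Section T.
Context {d : measure_display} {Omega : measurableType d} {R : realType}.
Lemma indA (f : Omega -> R) w (x : \bar R) :
  (\1_[set w' | (0 <= f w')%R] w)%:E * x + (\1_[set w' | (f w' < 0)%R] w)%:E * -oo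
  = if (0 <= f w)%R then x else -oo.
Proof.
rewrite !indicE; have [h|h] := leP 0%R (f w).
  rewrite mem_set // memNset ?mul1e ?mul0e ?adde0 //.
  by apply/negP; rewrite -leNgt.
rewrite memNset ?mem_set // ?mul1e ?mul0e ?add0e //.
by apply/negP; rewrite -ltNge.
Qed.
Lemma indR (f : Omega -> R) w (x : \bar R) :
  (\1_[set w' | (f w' <= 0)%R] w)%:E * x + (\1_[set w' | (0 < f w')%R] w)%:E * +oo
  = if (f w <= 0)%R then x else +oo.
Proof.
rewrite !indicE; have [h|h] := leP (f w) 0%R.
  rewrite mem_set // memNset ?mul1e ?mul0e ?adde0 //.
  by apply/negP; rewrite -leNgt.
rewrite memNset ?mem_set // ?mul1e ?mul0e ?add0e //.
by apply/negP; rewrite -ltNge.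
Qed.
End T.

Section Proc.
Context {d : measure_display} {Omega : measurableType d} {R : realType}.
Context (P : probability Omega R).
Local Set Implicit Arguments.

Lemma inLp_mul (G : set (set Omega)) (hG : sigma_algebra setT G) (hGm : G `<=` measurable)
  p (A : set Omega) (X : Omega -> R) :
  G A -> inLp P G p X -> inLp P G p (fun w => \1_A w * X w)%R.
Proof.
move=> GA [mX hp].
have mAG : measurable_fun (setT : set (g_sigma_algebraType G)) (\1_A : _ -> R).
  by apply: measurable_indic; rewrite (measurable_g_measurableTypeE hG).
have mXG := (measG hG X).1 mX.
have mAXG : measurable_fun (setT : set (g_sigma_algebraType G)) (fun w => \1_A w * X w)%R.
  exact: measurable_funM.
have hb w : (`|\1_A w * X w| <= `|X w|)%R.
  by rewrite indicE normrM; case: (w \in A); rewrite ?normr1 ?mul1r ?normr0 ?mul0r ?normr_ge0.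
split; first exact/(measG hG).
case: p hp => //.
- move=> iX; apply: (le_integrable measurableT _ _ iX).
    by apply/measurable_EFinP; exact: (measG_meas hG hGm).
  by move=> w _ /=; rewrite lee_fin.
- move=> [c hc]; exists (Num.max c 0%R); apply: filterS hc => w h.
  by apply: le_trans (hb w) _; rewrite le_max h.
Qed.

Lemma inLp_neg (G : set (set Omega)) (hG : sigma_algebra setT G) p (X : Omega -> R) :
  inLp P G p X -> inLp P G p (fun w => - X w)%R.
Proof.
move=> [mX hp]; split; first exact: measN.
case: p hp => //.
- move=> iX; rewrite (_ : EFin \o _ = -%E \o (EFin \o X)); first exact: integrableN.
  by apply/funext => w /=; rewrite EFinN.
- by move=> [c hc]; exists c; apply: filterS hc => w; rewrite normrN.
Qed.

Definition negp (V : @process d Omega R) : @process d Omega R := fun s w => (- V s w)%R.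

Lemma negpK V : negp (negp V) = V.
Proof. by apply/funext => s; apply/funext => w; rewrite /negp opprK. Qed.

Lemma mdot_negp t m V : mdot t m (negp V) = negp (mdot t m V).
Proof.
apply/funext => s; apply/funext => w; rewrite /mdot /negp.
by case: ifP => // _; rewrite mulrN.
Qed.

Context (F : nat -> set (set Omega)) (hF : is_filtration F) (T : nat) (p : pexp).

Lemma hFs t : sigma_algebra setT (F t). Proof. by case: hF. Qed.
Lemma hFm t : F t `<=` measurable. Proof. by case: hF. Qed.
Lemma hFmono s t : (s <= t)%N -> F s `<=` F t. Proof. by case: hF => _ _ h _; exact: h. Qed.

Lemma inVp_neg V : inVp P F T p V -> inVp P F T p (negp V).
Proof. by move=> hV u hu; exact: (inLp_neg (@hFs u) (hV u hu)). Qed.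

Lemma inVp_mdot s (A : set Omega) V : F s A -> inVp P F T p V -> inVp P F T p (mdot s \1_A V).
Proof.
move=> FA hV u hu; rewrite /mdot; case: (ltnP u s) => hsu /=; first exact: hV.
have h1 : sigma_algebra setT (F u) by case: hF.
have h2 : F u `<=` measurable by case: hF.
have h3 : F u A by case: hF => _ _ h _; exact: (h s u hsu).
exact: (inLp_mul h1 h2 A h3 (hV u hu)).
Qed.
End Proc.

Section ASide.
Context {d : measure_display} {Omega : measurableType d} {R : realType}.
Context (P : probability Omega R) (F : nat -> set (set Omega)) (T : nat) (p : pexp).
Local Notation proc := (@process d Omega R).

Definition A1s (phi : nat -> proc -> Omega -> \bar R) := forall (V : proc) (t : nat) (m : Omega -> \bar R),
      inVp P F T p V -> (t < T)%N -> inL0bar (F t.+1) m ->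
      ege P (phi t.+1 V) m ->
      ege P (phi t V) (fun w => (\1_[set w' | (0 <= V t w')%R] w)%:E
                                  * Essinf P (F t) m w
                                + (\1_[set w' | (V t w' < 0)%R] w)%:E * -oo).
Definition A2s (phi : nat -> proc -> Omega -> \bar R) := forall (V : proc) (t : nat),
      inVp P F T p V -> (t < T)%N ->
      ege P (phi t V) (fun w => (\1_[set w' | (0 <= V t w')%R] w)%:E
                                  * Essinf P (F t) (phi t.+1 V) w
                                + (\1_[set w' | (V t w' < 0)%R] w)%:E * -oo).
Definition A3s (phi : nat -> proc -> Omega -> \bar R) := forall (V : proc) (t : nat) (m : Omega -> \bar R),
      inVp P F T p V -> (t < T)%N -> inL0bar (F t) m ->
      {ae P, forall w, (0 <= V t w)%R} ->
      ege P (phi t.+1 V) m -> ege P (phi t V) m.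
Definition R1s (phi : nat -> proc -> Omega -> \bar R) := forall (V : proc) (t : nat) (m : Omega -> \bar R),
      inVp P F T p V -> (t < T)%N -> inL0bar (F t.+1) m ->
      ege P m (phi t.+1 V) ->
      ege P (fun w => (\1_[set w' | (V t w' <= 0)%R] w)%:E
                        * Esssup P (F t) m w
                      + (\1_[set w' | (0 < V t w')%R] w)%:E * +oo) (phi t V).
Definition R2s (phi : nat -> proc -> Omega -> \bar R) := forall (V : proc) (t : nat),
      inVp P F T p V -> (t < T)%N ->
      ege P (fun w => (\1_[set w' | (V t w' <= 0)%R] w)%:E
                        * Esssup P (F t) (phi t.+1 V) w
                      + (\1_[set w' | (0 < V t w')%R] w)%:E * +oo) (phi t V).
Definition R3s (phi : nat -> proc -> Omega -> \bar R) := forall (V : proc) (t : nat) (m : Omega -> \bar R),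
      inVp P F T p V -> (t < T)%N -> inL0bar (F t) m ->
      {ae P, forall w, (V t w <= 0)%R} ->
      ege P m (phi t.+1 V) -> ege P m (phi t V).

Context (phi : nat -> proc -> Omega -> \bar R) (hF : is_filtration F) (hphi : dynLM P F T p phi).

Lemma A1_A2 : A1s phi -> A2s phi.
Proof.
move=> H V t hV ht; apply: H => //.
- by case: hphi => h _ _; apply: h.
- by apply: aeW => w; exact: lexx.
Qed.

Lemma A2_A1 : A2s phi -> A1s phi.
Proof.
move=> H V t m hV ht hm hge.
have sG : sigma_algebra setT (F t) by case: hF.
have mG : F t `<=` measurable by case: hF.
have h2 := H V t hV ht.
have hmo := Essinf_mono P sG mG _ _ hge.
apply: filterS2 h2 hmo => w; rewrite !indA; case: ifP => _ h1 h3.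
  exact: le_trans h3 h1.
exact: leNye.
Qed.

Lemma A2_A3 : A2s phi -> A3s phi.
Proof.
move=> H V t m hV ht hm hVt hge.
have sG : sigma_algebra setT (F t) by case: hF.
have mG : F t `<=` measurable by case: hF.
have h2 := H V t hV ht.
have hmo := Essinf_mono P sG mG _ _ hge.
have hs := Essinf_self P sG mG hm.
apply: filterS2 (filterI h2 hmo) (filterI hs hVt) => w [h2w hmw] [hsw hvw].
move: h2w; rewrite indA hvw => h2w.
exact: le_trans hsw (le_trans hmw h2w).
Qed.

Lemma A3_A2 : A3s phi -> A2s phi.
Proof.
move=> H V t hV ht.
have sG : sigma_algebra setT (F t) by case: hF.
have mG : F t `<=` measurable by case: hF.
pose A := [set w | (0 <= V t w)%R].
have mVt : measurable_fun (setT : set (g_sigma_algebraType (F t))) (V t).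
  exact: (measG sG _).1 (hV t (ltnW ht)).1.
have mc : measurable_fun (setT : set (g_sigma_algebraType (F t))) (cst (0%R : R)).
  exact: measurable_cst.
have FA : F t A.
  have := measurable_fun_le measurableT mc mVt.
  by rewrite setTI (measurable_g_measurableTypeE sG).
have FA1 : F t.+1 A by case: hF => _ _ h _; exact: (h t t.+1 (leqnSn t)).
pose W := mdot t \1_A V.
have hW : inVp P F T p W := inVp_mdot hF t A FA hV.
pose M := (sA P (F t) (phi t.+1 V) \- sB P (F t) (phi t.+1 V)).
have hM : emeas_wrt (F t) M := Essinf_meas P sG mG _.
have hME := Essinf_ae P sG mG (phi t.+1 V).
pose m := fun w => if (0 <= V t w)%R then M w else -oo.
have hm : inL0bar (F t) m.
  apply/emeasG => //; apply: measurable_fun_ifT.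
  - exact: measurable_fun_ler mc mVt.
  - exact/emeasG.
  - exact: measurable_cst.
have iA w : (0 <= V t w)%R -> \1_A w = 1%R :> R.
  by move=> hv; rewrite indicE mem_set.
have iA0 w : ~~ (0 <= V t w)%R -> \1_A w = 0%R :> R.
  by move=> hv; rewrite indicE memNset //; apply/negP.
have hWt : {ae P, forall w, (0 <= W t w)%R}.
  apply: aeW => w; rewrite /W /mdot ltnn.
  by case: (boolP (0 <= V t w)%R) => hv; [rewrite iA // mul1r|rewrite iA0 // mul0r].
case: hphi => _ hloc hmon.
have hple : ple P T (mdot t.+1 \1_A V) (mdot t.+1 \1_A W).
  move=> u hu; apply: aeW => w; rewrite /W /mdot.
  case: (ltnP u t.+1) => h1; case: (ltnP u t) => h2 //=.
  - have -> : u = t by apply/eqP; rewrite eqn_leq h2 -ltnS h1.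
    case: (boolP (0 <= V t w)%R) => hv; first by rewrite iA // mul1r.
    by rewrite iA0 // mul0r ltW // ltNge.
  - case: (boolP (0 <= V t w)%R) => hv; first by rewrite iA // !mul1r.
    by rewrite iA0 // !mul0r.
have hge : ege P (phi t.+1 W) m.
  have l1 := hloc t.+1 V A ht hV FA1.
  have l2 := hloc t.+1 W A ht hW FA1.
  have mo := hmon t.+1 _ _ ht (inVp_mdot hF t.+1 A FA1 hV) (inVp_mdot hF t.+1 A FA1 hW) hple.
  have le := Essinf_le P sG mG (phi t.+1 V).
  apply: filterS2 (filterI l1 l2) (filterI (filterI mo le) hME) => w [e1 e2] [[mow lew] mew].
  rewrite /m; case: ifP => hv; last exact: leNye.
  move: e1 e2; rewrite iA // !mul1e => e1 e2.
  apply: le_trans (_ : _ <= Essinf P (F t) (phi t.+1 V) w) _; first by rewrite mew.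
  by rewrite e2; apply: le_trans lew _; rewrite e1.
have h3 := H W t m hW ht hm hWt hge.
have l0 := hloc t V A (ltnW ht) hV FA.
apply: filterS2 (filterI h3 l0) hME => w [h3w l0w] mew.
rewrite indA; case: ifP => hv; last exact: leNye.
move: l0w; rewrite iA // !mul1e => ->.
by rewrite mew; move: h3w; rewrite /m hv.
Qed.
End ASide.

Section RSide.
Local Set Implicit Arguments.
Context {d : measure_display} {Omega : measurableType d} {R : realType}.
Context (P : probability Omega R) (F : nat -> set (set Omega)) (T : nat) (p : pexp).
Local Notation proc := (@process d Omega R).
Context (phi : nat -> proc -> Omega -> \bar R) (hF : is_filtration F).

Definition psi : nat -> proc -> Omega -> \bar R := fun t V w => - phi t (negp V) w.

Lemma emeasNe (G : set (set Omega)) (hG : sigma_algebra setT G) (m : Omega -> \bar R) :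
  emeas_wrt G m -> emeas_wrt G (fun w => - m w).
Proof. by move=> /(emeasG hG) mm; apply/(emeasG hG); exact: measurableT_comp. Qed.

Lemma dynLM_psi : dynLM P F T p phi -> dynLM P F T p psi.
Proof.
case=> h1 h2 h3; split.
- move=> t V ht hV; have sGt : sigma_algebra setT (F t) by case: hF.
  exact: (emeasNe sGt (h1 t (negp V) ht (inVp_neg hF hV))).
- move=> t V A ht hV FA; have := h2 t (negp V) A ht (inVp_neg hF hV) FA.
  rewrite mdot_negp; apply: filterS => w h.
  by rewrite /psi !muleN h.
- move=> t V W ht hV hW hVW.
  have hWV : ple P T (negp W) (negp V).
    by move=> u hu; apply: filterS (hVW u hu) => w h; rewrite /negp lerN2.
  have := h3 t (negp W) (negp V) ht (inVp_neg hF hW) (inVp_neg hF hV) hWV.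
  by apply: filterS => w h; rewrite /psi leeN2.
Qed.

Lemma Esssup_neg (G : set (set Omega)) (m : Omega -> \bar R) w :
  Esssup P G (fun w => - m w) w = - Essinf P G m w.
Proof.
rewrite /Esssup; congr (- Essinf _ _ _ _); apply/funext => w'; exact: oppeK.
Qed.

Lemma R2_A2 : R2s P F T p phi -> A2s P F T p psi.
Proof.
move=> H U t hU ht; have := H (negp U) t (inVp_neg hF hU) ht.
apply: filterS => w; rewrite indR indA /negp oppr_le0.
case: ifP => _ h; last exact: leNye.
by rewrite /psi leeNr; exact: h.
Qed.

Lemma A2_R2 : A2s P F T p psi -> R2s P F T p phi.
Proof.
move=> H V t hV ht; have := H (negp V) t (inVp_neg hF hV) ht.
rewrite /psi negpK.
apply: filterS => w; rewrite indR indA /negp oppr_ge0.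
case: ifP => _ h; last exact: leey.
by rewrite /Esssup leeNr; exact: h.
Qed.

Lemma R3_A3 : R3s P F T p phi -> A3s P F T p psi.
Proof.
move=> H U t m hU ht hm hUt hge.
have sGt : sigma_algebra setT (F t) by case: hF.
have := H (negp U) t (fun w => - m w) (inVp_neg hF hU) ht (emeasNe sGt hm).
have hVt : {ae P, forall w, (negp U t w <= 0)%R}.
  by apply: filterS hUt => w; rewrite /negp oppr_le0.
have hge' : ege P (fun w => - m w) (phi t.+1 (negp U)).
  by apply: filterS hge => w; rewrite /psi leeNr.
move=> /(_ hVt hge'); apply: filterS => w.
by rewrite /psi leeNr.
Qed.

Lemma A3_R3 : A3s P F T p psi -> R3s P F T p phi.
Proof.
move=> H V t m hV ht hm hVt hge.
have sGt : sigma_algebra setT (F t) by case: hF.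
have := H (negp V) t (fun w => - m w) (inVp_neg hF hV) ht (emeasNe sGt hm).
have hUt : {ae P, forall w, (0 <= negp V t w)%R}.
  by apply: filterS hVt => w; rewrite /negp oppr_ge0.
have hge' : ege P (psi t.+1 (negp V)) (fun w => - m w).
  by rewrite /ege /psi negpK; apply: filterS hge => w; rewrite leeN2.
move=> /(_ hUt hge'); rewrite /psi negpK; apply: filterS => w.
by rewrite leeN2.
Qed.

Lemma R1_A1 : R1s P F T p phi -> A1s P F T p psi.
Proof.
move=> H U t m hU ht hm hge.
have sGt : sigma_algebra setT (F t.+1) by case: hF.
have hge' : ege P (fun w => - m w) (phi t.+1 (negp U)).
  by apply: filterS hge => w; rewrite /psi leeNr.
have := H (negp U) t (fun w => - m w) (inVp_neg hF hU) ht (emeasNe sGt hm) hge'.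
apply: filterS => w; rewrite indR indA Esssup_neg /negp oppr_le0.
case: ifP => _ h; last exact: leNye.
by rewrite /psi leeNr.
Qed.

Lemma A1_R1 : A1s P F T p psi -> R1s P F T p phi.
Proof.
move=> H V t m hV ht hm hge.
have sGt : sigma_algebra setT (F t.+1) by case: hF.
have hge' : ege P (psi t.+1 (negp V)) (fun w => - m w).
  by rewrite /ege /psi negpK; apply: filterS hge => w; rewrite leeN2.
have := H (negp V) t (fun w => - m w) (inVp_neg hF hV) ht (emeasNe sGt hm) hge'.
rewrite /psi negpK.
apply: filterS => w; rewrite indR indA /negp oppr_ge0.
case: ifP => _ h; last exact: leey.
by rewrite /Esssup leeNr; exact: h.
Qed.
End RSide.

Theorem proposition4p8 (d : measure_display) (Omega : measurableType d)
  (R : realType) (P : probability Omega R) (F : nat -> set (set Omega))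
  (T : nat) (p : pexp) (phi : nat -> process -> Omega -> \bar R)
  (hF : is_filtration F) (hphi : dynLM P F T p phi) :
  (* acceptance *)
  let A1 := forall (V : process) (t : nat) (m : Omega -> \bar R),
      inVp P F T p V -> (t < T)%N -> inL0bar (F t.+1) m ->
      ege P (phi t.+1 V) m ->
      ege P (phi t V) (fun w => (\1_[set w' | (0 <= V t w')%R] w)%:E
                                  * Essinf P (F t) m w
                                + (\1_[set w' | (V t w' < 0)%R] w)%:E * -oo) in
  let A2 := forall (V : process) (t : nat),
      inVp P F T p V -> (t < T)%N ->
      ege P (phi t V) (fun w => (\1_[set w' | (0 <= V t w')%R] w)%:E
                                  * Essinf P (F t) (phi t.+1 V) w
                                + (\1_[set w' | (V t w' < 0)%R] w)%:E * -oo) in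
  let A3 := forall (V : process) (t : nat) (m : Omega -> \bar R),
      inVp P F T p V -> (t < T)%N -> inL0bar (F t) m ->
      {ae P, forall w, (0 <= V t w)%R} ->
      ege P (phi t.+1 V) m -> ege P (phi t V) m in
  (* rejection *)
  let R1 := forall (V : process) (t : nat) (m : Omega -> \bar R),
      inVp P F T p V -> (t < T)%N -> inL0bar (F t.+1) m ->
      ege P m (phi t.+1 V) ->
      ege P (fun w => (\1_[set w' | (V t w' <= 0)%R] w)%:E
                        * Esssup P (F t) m w
                      + (\1_[set w' | (0 < V t w')%R] w)%:E * +oo) (phi t V) in
  let R2 := forall (V : process) (t : nat),
      inVp P F T p V -> (t < T)%N ->
      ege P (fun w => (\1_[set w' | (V t w' <= 0)%R] w)%:E
                        * Esssup P (F t) (phi t.+1 V) w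
                      + (\1_[set w' | (0 < V t w')%R] w)%:E * +oo) (phi t V) in
  let R3 := forall (V : process) (t : nat) (m : Omega -> \bar R),
      inVp P F T p V -> (t < T)%N -> inL0bar (F t) m ->
      {ae P, forall w, (V t w <= 0)%R} ->
      ege P m (phi t.+1 V) -> ege P m (phi t V) in
  [/\ (A1 <-> A2), (A2 <-> A3), (R1 <-> R2) & (R2 <-> R3)].
Proof.
move=> A1 A2 A3 R1 R2 R3.
have hpsi := dynLM_psi hF hphi.
split.
- by split; [exact: A1_A2 | exact: A2_A1].
- by split; [exact: A2_A3 | exact: A3_A2].
- split => h.
  + apply: (A2_R2 hF); apply: (A1_A2 _ _ _ _ _ hpsi); exact: (R1_A1 hF).
  + apply: (A1_R1 hF); apply: (A2_A1 _ _ _ _ _ hF); exact: (R2_A2 hF).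
- split => h.
  + apply: (A3_R3 hF); apply: (A2_A3 _ _ _ _ _ hF); exact: (R2_A2 hF).
  + apply: (A2_R2 hF); apply: (A3_A2 _ _ _ _ _ hF hpsi); exact: (R3_A3 hF).
Qed.
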